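(* Let $(X,d)$ be a metric space with betweenness exponent $t_0=t_0(d)$, and let $W\subseteq X$. Then for every $\varepsilon>0$, $$\mathcal M^*_{2^{1/t_0}\varepsilon}(W)\le \hat{\mathcal N}^X_\varepsilon(W)\le \hat{\mathcal N}_\varepsilon(W)\le \hat{\mathcal M}_\varepsilon(W)\le \mathcal M^*_\varepsilon(W).$$
   Context: Closed balls: $B(c,r)=\{x\in X:d(x,c)\le r\}$. A set $C\subseteq X$ is an $\varepsilon$-net for $W\subseteq X$ if $W\subseteq\bigcup_{c\in C}B(c,\varepsilon)$. A set $A\subseteq X$ is $\varepsilon$-distinguishable if $d(x,y)>\varepsilon$ for all distinct $x,y\in A$. For $W,A\subseteq X$: $\hat{\mathcal N}^A_\varepsilon(W)$ is the minimal cardinality of an $\varepsilon$-net $C$ for $W$ with $C\subseteq A$, and $\hat{\mathcal N}_\varepsilon(W):=\hat{\mathcal N}^W_\varepsilon(W)$. A set $A$ is maximal $\varepsilon$-distinguishable with respect to $W$ if $A\subseteq W$ is $\varepsilon$-distinguishable and no $\varepsilon$-distinguishable $B\subseteq W$ strictly contains $A$. $\hat{\mathcal M}_\varepsilon(W)$ is the smallest cardinality of a maximal $\varepsilon$-distinguishable set with respect to $W$. $\mathcal M^*_\varepsilon(W)$ is the smallest cardinal number that is $\ge \operatorname{card}(A)$ for every $\varepsilon$-distinguishable $A\subseteq W$. The betweenness exponent $t_0(d)\in[1,\infty]$ is the supremum of all $t>0$ for which $(x,y)\mapsto(d(x,y))^t$ is a metric on $X$; $t_0(d)=\infty$ iff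 $d$ is an ultrametric. Convention: $2^{1/\infty}=1$. *)

(* Defs.v *)
From Stdlib Require Import Reals.
Open Scope R_scope.

Definition is_metric {X : Type} (d : X -> X -> R) : Prop :=
  (forall x y, 0 <= d x y) /\
  (forall x y, d x y = 0 <-> x = y) /\
  (forall x y, d x y = d y x) /\
  (forall x y z, d x z <= d x y + d y z).

Definition rpow (r t : R) : R :=
  match Req_EM_T r 0 with left _ => 0 | right _ => Rpower r t end.

Definition powd {X : Type} (d : X -> X -> R) (t : R) : X -> X -> R :=
  fun x y => rpow (d x y) t.

Definition metric_exponents {X : Type} (d : X -> X -> R) : R -> Prop :=
  fun t => 0 < t /\ is_metric (powd d t).

(** t0 is the betweenness exponent of d: [Some t] means t0 = t (finite
    supremum), [None] means t0 = infinity (the set is unbounded). *)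
Definition betweenness_exponent {X : Type} (d : X -> X -> R) (t0 : option R) : Prop :=
  match t0 with
  | Some t => is_lub (metric_exponents d) t
  | None => ~ bound (metric_exponents d)
  end.

(** 2^(1/t0), with the convention 2^(1/infinity) = 1. *)
Definition exp_factor (t0 : option R) : R :=
  match t0 with Some t => Rpower 2 (/ t) | None => 1 end.

Definition subset {X : Type} (A B : X -> Prop) : Prop := forall x, A x -> B x.

Definition ball {X : Type} (d : X -> X -> R) (c : X) (r : R) : X -> Prop :=
  fun x => d x c <= r.

Definition is_net {X : Type} (d : X -> X -> R) (eps : R) (W C : X -> Prop) : Prop :=
  forall w, W w -> exists c, C c /\ ball d c eps w.

Definition distinguishable {X : Type} (d : X -> X -> R) (eps : R) (A : X -> Prop) : Prop :=
  forall x y, A x -> A y -> x <> y -> eps < d x y.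

Definition maximal_disting {X : Type} (d : X -> X -> R) (eps : R) (W A : X -> Prop) : Prop :=
  subset A W /\ distinguishable d eps A /\
  ~ (exists B, subset B W /\ distinguishable d eps B /\ subset A B /\
               exists x, B x /\ ~ A x).

(** Candidate classes whose (minimal / supremal) cardinalities define the
    quantities of the paper. *)
(* eps-nets C for W with C subset of A: N^A_eps(W) = min card of these *)
Definition net_cands {X : Type} (d : X -> X -> R) (eps : R) (W A : X -> Prop)
  : (X -> Prop) -> Prop :=
  fun C => subset C A /\ is_net d eps W C.
(* eps-distinguishable subsets of W: M*_eps(W) = sup card of these *)
Definition disting_cands {X : Type} (d : X -> X -> R) (eps : R) (W : X -> Prop)
  : (X -> Prop) -> Prop :=
  fun A => subset A W /\ distinguishable d eps A.

Definition card_le {X : Type} (A B : X -> Prop) : Prop :=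
  exists f : X -> X, (forall x, A x -> B (f x)) /\
    (forall x y, A x -> A y -> f x = f y -> x = y).

(** Comparisons between minima / suprema of cardinalities of classes
    F, G of subsets of X (expressed without a cardinal type). *)
(* min_{A in F} |A| <= min_{B in G} |B| *)
Definition cmin_le_cmin {X : Type} (F G : (X -> Prop) -> Prop) : Prop :=
  forall B, G B -> exists A, F A /\ card_le A B.
(* sup_{A in F} |A| <= min_{B in G} |B| *)
Definition csup_le_cmin {X : Type} (F G : (X -> Prop) -> Prop) : Prop :=
  forall A B, F A -> G B -> card_le A B.
(* min_{A in F} |A| (exists) <= sup_{B in G} |B|, i.e. |A| <= every
   cardinal (represented by a subset Z of X) bounding all |B|, B in G. *)
Definition cmin_le_csup {X : Type} (F G : (X -> Prop) -> Prop) : Prop :=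
  exists A, F A /\
    forall Z : X -> Prop, (forall B, G B -> card_le B Z) -> card_le A Z.

(* Main.v *)
Require Import Defs.
From Stdlib Require Import Reals Lra Classical ClassicalEpsilon FunctionalExtensionality PropExtensionality.
Open Scope R_scope.

Definition bigU {X : Type} (S : (X -> Prop) -> Prop) : X -> Prop :=
  fun x => exists A, S A /\ A x.

Definition tower {X : Type} (g : (X -> Prop) -> (X -> Prop)) (F : (X -> Prop) -> Prop) :=
  (forall A, F A -> F (g A)) /\ (forall S, (forall A, S A -> F A) -> F (bigU S)).

Definition inT {X : Type} g (A : X -> Prop) := forall F, tower g F -> F A.

Lemma inT_tower {X : Type} (g : (X -> Prop) -> (X -> Prop)) : tower g (inT g).
Proof.
  split.
  - intros A HA F HF. apply (proj1 HF). apply HA; exact HF.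
  - intros S HS F HF. apply (proj2 HF). intros A HA. apply HS; auto.
Qed.

Definition comparable {X : Type} g (C : X -> Prop) :=
  forall A, inT g A -> subset A C \/ subset C A.

Lemma set_eq {X : Type} (A B : X -> Prop) : subset A B -> subset B A -> A = B.
Proof.
  intros H1 H2. apply functional_extensionality; intro x.
  apply propositional_extensionality; split; auto.
Qed.


Lemma key {X : Type} (g : (X -> Prop) -> (X -> Prop))
  (ginc : forall A, subset A (g A))
  (gone : forall A y z, g A y -> ~ A y -> g A z -> ~ A z -> y = z)
  (C : X -> Prop) :
  inT g C -> comparable g C -> forall A, inT g A -> subset A C \/ subset (g C) A.
Proof.
  intros HC Hcomp A HA.
  assert (H : (fun A => inT g A /\ (subset A C \/ subset (g C) A)) A).
  { apply HA. split.
    - intros B [HB [HBC | HgB]]; split; [apply (proj1 (inT_tower g)); auto| |apply (proj1 (inT_tower g)); auto|].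
      + destruct (classic (exists z, C z /\ ~ B z)) as [[z [Cz nBz]] | Hn].
        * left. destruct (Hcomp (g B) (proj1 (inT_tower g) B HB)) as [H1 | H1]; auto.
          intros y Hy. destruct (classic (B y)) as [By | nBy]; auto.
          assert (y = z) by (apply (gone B y z); auto). subst; auto.
        * assert (B = C).
          { apply set_eq; auto. intros x Cx. apply NNPP; intro nB; apply Hn; eauto. }
          subst. right. intros x Hx; auto.
      + right. intros x Hx. apply ginc. auto.
    - intros S HS. split.
      + apply (proj2 (inT_tower g)). intros B HB; apply HS; auto.
      + destruct (classic (forall B, S B -> subset B C)) as [Hall | Hn].
        * left. intros x [B [SB Bx]]. eapply Hall; eauto.
        * apply not_all_ex_not in Hn. destruct Hn as [B HB].
          apply imply_to_and in HB. destruct HB as [SB nBC].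
          destruct (proj2 (HS B SB)) as [H1 | H1]; [contradiction|].
          right. intros x Hx. exists B. split; auto. }
  exact (proj2 H).
Qed.

Lemma all_comp {X : Type} (g : (X -> Prop) -> (X -> Prop))
  (ginc : forall A, subset A (g A))
  (gone : forall A y z, g A y -> ~ A y -> g A z -> ~ A z -> y = z)
  (C : X -> Prop) : inT g C -> comparable g C.
Proof.
  intros HC.
  assert (H : (fun C => inT g C /\ comparable g C) C).
  { apply HC. split.
    - intros B [HB Hc]. split; [apply (proj1 (inT_tower g)); auto|].
      intros A HA. destruct (key g ginc gone B HB Hc A HA) as [H1 | H1].
      + left. intros x Hx. apply ginc; auto.
      + right; auto.
    - intros S HS. split.
      + apply (proj2 (inT_tower g)). intros B HB; apply HS; auto.
      + intros A HA.
        destruct (classic (forall B, S B -> subset B A)) as [Hall | Hn].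
        * right. intros x [B [SB Bx]]. eapply Hall; eauto.
        * apply not_all_ex_not in Hn. destruct Hn as [B HB].
          apply imply_to_and in HB. destruct HB as [SB nBA].
          destruct (proj2 (HS B SB) A HA) as [H1 | H1]; [|contradiction].
          left. intros x Hx. exists B. split; auto. }
  exact (proj2 H).
Qed.

Definition addpt {X : Type} (A : X -> Prop) (x : X) : X -> Prop := fun y => A y \/ y = x.

Definition ext_ok {X : Type} d eps (W A : X -> Prop) x :=
  W x /\ ~ A x /\ distinguishable d eps (addpt A x).

Definition gstep {X : Type} (d : X -> X -> R) eps (W A : X -> Prop) : X -> Prop :=
  match excluded_middle_informative (exists x, ext_ok d eps W A x) with
  | left h => addpt A (proj1_sig (constructive_indefinite_description _ h))
  | right _ => A
  end.

Lemma gstep_cases {X : Type} d eps (W A : X -> Prop) :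
  (gstep d eps W A = A /\ ~ exists x, ext_ok d eps W A x) \/
  exists x, ext_ok d eps W A x /\ gstep d eps W A = addpt A x.
Proof.
  unfold gstep. destruct excluded_middle_informative as [h | h].
  - right. destruct (constructive_indefinite_description _ h) as [x hx]. simpl. eauto.
  - left; auto.
Qed.

Lemma maximal_exists {X : Type} (d : X -> X -> R) eps (W : X -> Prop) :
  exists A, maximal_disting d eps W A.
Proof.
  set (g := gstep d eps W).
  assert (ginc : forall A, subset A (g A)).
  { intros A x Hx. unfold g. destruct (gstep_cases d eps W A) as [[-> _] | [y [_ ->]]]; auto.
    left; auto. }
  assert (gone : forall A y z, g A y -> ~ A y -> g A z -> ~ A z -> y = z).
  { intros A y z. unfold g. destruct (gstep_cases d eps W A) as [[-> _] | [w [_ ->]]].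
    - intros; contradiction.
    - intros [H|H] n1 [H'|H'] n2; try contradiction. congruence. }
  assert (good : forall A, inT g A -> subset A W /\ distinguishable d eps A).
  { intros A HA.
    assert (H : (fun A => inT g A /\ subset A W /\ distinguishable d eps A) A).
    { apply HA. split.
      - intros B [HB [HW HD]]. split; [apply (proj1 (inT_tower g)); auto|].
        unfold g. destruct (gstep_cases d eps W B) as [[-> _] | [w [[Ww [_ Hd]] ->]]]; auto.
        split; auto. intros x [Hx | ->]; auto.
      - intros S HS. split; [apply (proj2 (inT_tower g)); intros B HB; apply HS; auto|].
        split.
        + intros x [B [SB Bx]]. apply (proj1 (proj2 (HS B SB))); auto.
        + intros x y [B1 [S1 B1x]] [B2 [S2 B2y]] nxy.
          destruct (all_comp g ginc gone B1 (proj1 (HS B1 S1)) B2 (proj1 (HS B2 S2))) as [H1 | H1].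
          * apply (proj2 (proj2 (HS B1 S1))); auto.
          * apply (proj2 (proj2 (HS B2 S2))); auto. }
    exact (proj2 H). }
  set (U := bigU (inT g)).
  assert (HU : inT g U) by (apply (proj2 (inT_tower g)); auto).
  assert (HgU : subset (g U) U).
  { intros x Hx. exists (g U). split; auto. apply (proj1 (inT_tower g)); auto. }
  destruct (good U HU) as [UW UD].
  exists U. split; [auto | split; [auto|]].
  intros [B [BW [BD [UB [x [Bx nUx]]]]]].
  assert (Hext : ext_ok d eps W U x).
  { split; [auto | split; [auto|]].
    intros a b Ha Hb nab. apply BD; auto.
    - destruct Ha as [Ha | ->]; auto.
    - destruct Hb as [Hb | ->]; auto. }
  revert HgU. unfold g. destruct (gstep_cases d eps W U) as [[_ Hn] | [w [[_ [nUw _]] ->]]].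
  - exfalso; eauto.
  - intros H. apply nUw. apply H. right; auto.
Qed.

Lemma exp_le (a b : R) : a <= b -> exp a <= exp b.
Proof. intros [H | ->]; [left; apply exp_increasing; auto | right; auto]. Qed.

Lemma rpow_le (x eps t : R) : 0 <= x -> x <= eps -> 0 < eps -> 0 < t ->
  rpow x t <= exp (t * ln eps).
Proof.
  intros H0 H1 H2 Ht. unfold rpow. destruct (Req_EM_T x 0).
  - left; apply exp_pos.
  - unfold Rpower. apply exp_le. apply Rmult_le_compat_l; [lra|].
    destruct H1 as [Hl | ->]; [|lra].
    left; apply ln_increasing; lra.
Qed.

Lemma pow_bound {X : Type} (d : X -> X -> R) (t eps : R) (a b c : X) :
  is_metric d -> metric_exponents d t -> d a c <= eps -> d b c <= eps ->
  a <> b -> 0 < eps -> t * ln (d a b) <= ln 2 + t * ln eps.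
Proof.
  intros [Hpos [Hz [Hsym Htri]]] [Ht [_ [_ [_ Ptri]]]] H1 H2 nab He.
  specialize (Ptri a c b). unfold powd in Ptri.
  assert (Hab : d a b <> 0) by (intro H; apply nab; apply Hz; auto).
  unfold rpow at 1 in Ptri. destruct (Req_EM_T (d a b) 0); [contradiction|].
  rewrite (Hsym c b) in Ptri.
  pose proof (rpow_le (d a c) eps t (Hpos a c) H1 He Ht).
  pose proof (rpow_le (d b c) eps t (Hpos b c) H2 He Ht).
  unfold Rpower in Ptri.
  apply Rnot_lt_le; intro Hc.
  apply exp_increasing in Hc. rewrite exp_plus, exp_ln in Hc by lra. lra.
Qed.

Lemma one_exp {X : Type} (d : X -> X -> R) : is_metric d -> metric_exponents d 1.
Proof.
  intros Hm. split; [lra|].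
  assert (E : powd d 1 = d).
  { apply functional_extensionality; intro x; apply functional_extensionality; intro y.
    unfold powd, rpow. destruct (Req_EM_T (d x y) 0); auto.
    apply Rpower_1. destruct Hm as [Hp _]. specialize (Hp x y). lra. }
  rewrite E; auto.
Qed.

Lemma close_pts {X : Type} (d : X -> X -> R) (t0 : option R) (eps : R) (a b c : X) :
  is_metric d -> betweenness_exponent d t0 -> 0 < eps ->
  d a c <= eps -> d b c <= eps -> a <> b -> d a b <= exp_factor t0 * eps.
Proof.
  intros Hm Hb He H1 H2 nab.
  assert (Dpos : 0 < d a b).
  { destruct Hm as [Hp [Hz _]]. destruct (Hp a b) as [H|H]; auto.
    exfalso; apply nab; apply Hz; auto. }
  apply Rnot_lt_le; intro Hc.
  set (L := ln (d a b) - ln eps).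
  assert (ln2p : 0 < ln 2) by (pose proof ln_lt_2; lra).
  assert (Lpos : 0 < L /\ (forall t0', t0 = Some t0' -> 0 < t0' -> ln 2 < t0' * L)).
  { destruct t0 as [t0'|]; simpl in Hc.
    - unfold Rpower in Hc.
      assert (Hl : ln (exp (/ t0' * ln 2) * eps) < ln (d a b)).
      { apply ln_increasing; auto. apply Rmult_lt_0_compat; auto; apply exp_pos. }
      rewrite ln_mult, ln_exp in Hl by (auto; apply exp_pos).
      assert (t0pos : 0 < t0').
      { destruct Hb as [Hub _]. pose proof (Hub 1 (one_exp d Hm)); lra. }
      split.
      + unfold L. assert (0 < / t0' * ln 2) by (apply Rmult_lt_0_compat; auto; apply Rinv_0_lt_compat; auto). lra.
      + intros t1 Heq Ht1. injection Heq as <-.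
        assert (/ t0' * ln 2 < L) by (unfold L; lra).
        apply Rmult_lt_compat_l with (r := t0') in H; auto.
        replace (t0' * (/ t0' * ln 2)) with (ln 2) in H by (field; lra). auto.
    - split; [|discriminate]. unfold L.
      assert (ln eps < ln (d a b)) by (apply ln_increasing; lra). lra. }
  destruct Lpos as [Lpos Lt0].
  set (tau := ln 2 / L).
  assert (Hex : exists t, metric_exponents d t /\ tau < t).
  { destruct t0 as [t0'|]; simpl in Hb.
    - apply NNPP; intro Hn. destruct Hb as [Hub Hlub].
      assert (t0pos : 0 < t0') by (pose proof (Hub 1 (one_exp d Hm)); lra).
      assert (Hle : t0' <= tau).
      { apply Hlub. intros t Ht. apply Rnot_lt_le; intro; apply Hn; eauto. }
      pose proof (Lt0 t0' eq_refl t0pos).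
      assert (tau * L = ln 2) by (unfold tau; field; lra).
      pose proof (Rmult_le_compat_r L _ _ (Rlt_le _ _ Lpos) Hle). lra.
    - apply NNPP; intro Hn. apply Hb. exists tau. intros t Ht.
      apply Rnot_lt_le; intro; apply Hn; eauto. }
  destruct Hex as [t [Ht Htau]].
  pose proof (pow_bound d t eps a b c Hm Ht H1 H2 nab He).
  assert (tau * L = ln 2) by (unfold tau; field; lra).
  pose proof (Rmult_lt_compat_r L _ _ Lpos Htau).
  unfold L in *. lra.
Qed.

Theorem lemma2p6 (X : Type) (d : X -> X -> R) (W : X -> Prop)
    (t0 : option R) (eps : R) :
  is_metric d -> betweenness_exponent d t0 -> 0 < eps ->
  (* M*_{2^{1/t0} eps}(W) <= N^X_eps(W) *)
  csup_le_cmin (disting_cands d (exp_factor t0 * eps) W)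
               (net_cands d eps W (fun _ => True)) /\
  (* N^X_eps(W) <= N_eps(W) *)
  cmin_le_cmin (net_cands d eps W (fun _ => True)) (net_cands d eps W W) /\
  (* N_eps(W) <= M^_eps(W) *)
  cmin_le_cmin (net_cands d eps W W) (maximal_disting d eps W) /\
  (* M^_eps(W) <= M*_eps(W) (including existence of a maximal set) *)
  cmin_le_csup (maximal_disting d eps W) (disting_cands d eps W).
Proof.
  intros Hm Hb He. split; [|split; [|split]].
  - intros A C [AW AD] [_ Cnet].
    set (f := fun a => match excluded_middle_informative (exists c, C c /\ ball d c eps a) with
                       | left h => proj1_sig (constructive_indefinite_description _ h)
                       | right _ => a end).
    assert (Hf : forall a, A a -> C (f a) /\ ball d (f a) eps a).
    { intros a Ha. unfold f. destruct excluded_middle_informative as [h | h].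
      - destruct (constructive_indefinite_description _ h) as [c hc]; simpl; auto.
      - exfalso; apply h; apply Cnet; auto. }
    exists f. split; [intros a Ha; apply Hf; auto|].
    intros a b Ha Hb2 Hfab. apply NNPP; intro nab.
    destruct (Hf a Ha) as [_ Ba]. destruct (Hf b Hb2) as [_ Bb].
    unfold ball in Ba, Bb. rewrite Hfab in Ba.
    pose proof (close_pts d t0 eps a b (f b) Hm Hb He Ba Bb nab).
    pose proof (AD a b Ha Hb2 nab). lra.
  - intros B [BW Bnet]. exists B. split; [split; [intros x _; exact I | auto]|].
    exists (fun x => x). split; auto.
  - intros B [BW [BD Bmax]]. exists B. split.
    + split; auto. intros w Hw.
      destruct (classic (B w)) as [Bw | nBw].
      * exists w. split; auto. unfold ball. destruct Hm as [_ [Hz _]].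
        rewrite (proj2 (Hz w w) eq_refl); lra.
      * apply NNPP; intro Hn. apply Bmax. exists (addpt B w).
        split; [intros x [Hx | ->]; auto|]. split; [|split; [intros x Hx; left; auto | exists w; split; [right; auto | auto]]].
        intros x y Hx Hy nxy.
        assert (Hfar : forall c, B c -> eps < d w c).
        { intros c Bc. apply Rnot_le_lt; intro Hle. apply Hn; exists c; split; auto. }
        destruct Hm as [_ [_ [Hsym _]]].
        destruct Hx as [Hx | ->]; destruct Hy as [Hy | ->].
        -- apply BD; auto.
        -- rewrite Hsym; apply Hfar; auto.
        -- apply Hfar; auto.
        -- congruence.
    + exists (fun x => x). split; auto.
  - destruct (maximal_exists d eps W) as [A HA]. exists A. split; auto.
    intros Z HZ. apply HZ. destruct HA as [AW [AD _]]. split; auto.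
Qed.
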